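(* Let $\alpha$ be a nonzero real number and let $\gamma$ be a closed $\alpha$-stationary curve in $\mathbb S^2$ not passing through $N$. (1) If $\gamma$ is contained in the open upper hemisphere $\mathbb S^2_+=\mathbb S^2\cap\{z>0\}$, then $\alpha<0$. (2) If $\gamma$ is contained in the open lower hemisphere $\mathbb S^2_-=\mathbb S^2\cap\{z<0\}$, then $\alpha>0$.
   Context: $\mathbb S^2\subset\mathbb R^3$ is the unit sphere with the Euclidean inner product $\langle,\rangle$. It is parametrized by $\Psi(u,v)=(\sin u\cos v,\sin u\sin v,\cos u)$, and $N=(0,0,1)$. The spherical distance from $\Psi(u,v)$ to $N$ is $u\in[0,\pi]$. For a curve $\gamma(t)=\Psi(u(t),v(t))$, the energy is $$E_\alpha[\gamma]=\int_\gamma\mathsf d^\alpha ds=\int u^\alpha\sqrt{u'^2+\sin^2(u)v'^2}\,dt,$$ where $\mathsf d$ is the distance to $N$. The curve is $\alpha$-stationary if it is a critical point of $E_\alpha$ (Euler–Lagrange equations). Equivalently, its curvature satisfies $\kappa=\alpha\langle\mathbf n,\xi\rangle/\mathsf d$. Here $\mathbf n=(\gamma'\times\gamma)/|\gamma'|$, $\kappa=\langle\gamma'',\mathbf n\rangle/|\gamma'|^2$, and $\xi=\Psi_u$ is the unit tangent of the minimizing geodesic from $N$. Throughout the paper, $\alpha\ne0$ and curves avoid $N$. *)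

(* Defs.v *)
From Stdlib Require Import Reals.
From Coquelicot Require Import Coquelicot.
Open Scope R_scope.

Definition vec3 := (R * R * R)%type.
Definition vx (p : vec3) : R := fst (fst p).
Definition vy (p : vec3) : R := snd (fst p).
Definition vz (p : vec3) : R := snd p.
Definition dot (p q : vec3) : R := vx p * vx q + vy p * vy q + vz p * vz q.
Definition vnorm (p : vec3) : R := sqrt (dot p p).
Definition cross (p q : vec3) : vec3 :=
  (vy p * vz q - vz p * vy q, vz p * vx q - vx p * vz q, vx p * vy q - vy p * vx q).
Definition vscale (a : R) (p : vec3) : vec3 := (a * vx p, a * vy p, a * vz p).
Definition vsub (p q : vec3) : vec3 := (vx p - vx q, vy p - vy q, vz p - vz q).

Definition Npole : vec3 := (0, 0, 1).
Definition Spole : vec3 := (0, 0, -1).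

(* Spherical distance to N: for p = Psi(u,v), d(p) = u = acos (z). *)
Definition dN (p : vec3) : R := acos (vz p).

(* xi = Psi_u at p = Psi(u,v):  Psi_u = (cos u * p - N) / sin u,
   with cos u = z, sin u = sin (dN p) = sqrt(1 - z^2).  Defined off the poles. *)
Definition xi (p : vec3) : R * R * R :=
  vscale (/ sin (dN p)) (vsub (vscale (vz p) p) Npole).

Record curve := mkCurve { cx : R -> R; cy : R -> R; cz : R -> R }.
Definition pt (g : curve) (t : R) : vec3 := (cx g t, cy g t, cz g t).
Definition vel (g : curve) (t : R) : vec3 :=
  (Derive (cx g) t, Derive (cy g) t, Derive (cz g) t).
Definition acc (g : curve) (t : R) : vec3 :=
  (Derive_n (cx g) 2 t, Derive_n (cy g) 2 t, Derive_n (cz g) 2 t).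

Definition smooth_curve (g : curve) : Prop :=
  forall (n : nat) (t : R),
    ex_derive_n (cx g) n t /\ ex_derive_n (cy g) n t /\ ex_derive_n (cz g) n t.

Definition regular_curve (g : curve) : Prop := forall t, vel g t <> (0, 0, 0).

Definition on_sphere (g : curve) : Prop := forall t, dot (pt g t) (pt g t) = 1.

Definition closed_curve (g : curve) : Prop :=
  exists T, 0 < T /\ forall t, pt g (t + T) = pt g t.

Definition avoids_N (g : curve) : Prop := forall t, pt g t <> Npole.

Definition nvec (g : curve) (t : R) : vec3 :=
  vscale (/ vnorm (vel g t)) (cross (vel g t) (pt g t)).
Definition kappa (g : curve) (t : R) : R :=
  dot (acc g t) (nvec g t) / (vnorm (vel g t) ^ 2).

(* alpha-stationary: kappa = alpha <n, xi> / d, at every point where xi is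
   defined (i.e. off the south pole; N is avoided by assumption). *)
Definition alpha_stationary (alpha : R) (g : curve) : Prop :=
  forall t, pt g t <> Spole ->
    kappa g t = alpha * dot (nvec g t) (xi (pt g t)) / dN (pt g t).

(* Main.v *)
Require Import Defs.
From Stdlib Require Import Reals Lra.
From Coquelicot Require Import Coquelicot.
Open Scope R_scope.

Lemma const_deriv (F : R -> R) c t l : (forall s, F s = c) -> derivable_pt_lim F t l -> l = 0.
Proof.
  intros HF Hl. assert (H0 : derivable_pt_lim F t 0).
  { intros eps Heps. exists (mkposreal 1 Rlt_0_1). intros h Hh _.
    rewrite !HF. replace ((c - c) / h - 0) with 0 by (field; exact Hh).
    rewrite Rabs_R0. exact Heps. }
  exact (uniqueness_limite F t l 0 Hl H0).
Qed.

Lemma dl (f : R -> R) t : ex_derive f t -> derivable_pt_lim f t (Derive f t).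
Proof. intro H. apply is_derive_Reals. apply Derive_correct. exact H. Qed.

Lemma sphere_ids g : smooth_curve g -> on_sphere g -> forall t,
  dot (pt g t) (vel g t) = 0 /\ dot (vel g t) (vel g t) + dot (pt g t) (acc g t) = 0.
Proof.
  intros Hs Ho.
  assert (D1 : forall t, ex_derive (cx g) t /\ ex_derive (cy g) t /\ ex_derive (cz g) t).
  { intros t. destruct (Hs 1%nat t) as [a [b c]]. exact (conj a (conj b c)). }
  assert (D2 : forall t, ex_derive (Derive (cx g)) t /\ ex_derive (Derive (cy g)) t /\ ex_derive (Derive (cz g)) t).
  { intros t. destruct (Hs 2%nat t) as [a [b c]]. exact (conj a (conj b c)). }
  assert (H1 : forall t, dot (pt g t) (vel g t) = 0).
  { intro t. destruct (D1 t) as [hx [hy hz]].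
    pose proof (derivable_pt_lim_plus _ _ t _ _
      (derivable_pt_lim_plus _ _ t _ _ (derivable_pt_lim_mult _ _ t _ _ (dl _ t hx) (dl _ t hx))
         (derivable_pt_lim_mult _ _ t _ _ (dl _ t hy) (dl _ t hy)))
      (derivable_pt_lim_mult _ _ t _ _ (dl _ t hz) (dl _ t hz))) as HD.
    apply const_deriv with (c := 1) in HD.
    - unfold dot, pt, vel, vx, vy, vz; simpl. lra.
    - intro s. unfold plus_fct, mult_fct. pose proof (Ho s) as E. unfold dot, pt, vx, vy, vz in E; simpl in E. lra. }
  intro t. split; [apply H1|].
  destruct (D1 t) as [hx [hy hz]]. destruct (D2 t) as [kx [ky kz]].
  pose proof (derivable_pt_lim_plus _ _ t _ _
      (derivable_pt_lim_plus _ _ t _ _ (derivable_pt_lim_mult _ _ t _ _ (dl _ t hx) (dl _ t kx))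
         (derivable_pt_lim_mult _ _ t _ _ (dl _ t hy) (dl _ t ky)))
      (derivable_pt_lim_mult _ _ t _ _ (dl _ t hz) (dl _ t kz))) as HD.
  apply const_deriv with (c := 0) in HD.
  - unfold dot, pt, vel, acc, vx, vy, vz; simpl. change (fun x0 : R => cx g x0) with (cx g); change (fun x0 : R => cy g x0) with (cy g); change (fun x0 : R => cz g x0) with (cz g); change (fun x => Derive (cx g) x) with (Derive (cx g)); change (fun x => Derive (cy g) x) with (Derive (cy g)); change (fun x => Derive (cz g) x) with (Derive (cz g)). lra.
  - intro s. unfold plus_fct, mult_fct. pose proof (H1 s) as E. unfold dot, pt, vel, vx, vy, vz in E; simpl in E. lra.
Qed.
Lemma sign_lemma (F : R -> R) q L : derivable_pt_lim F q L -> L < 0 ->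
  exists d, 0 < d /\ forall h, 0 < h < d -> F q < F (q - h) /\ F (q + h) < F q.
Proof.
  intros HF HL. destruct (HF (- L / 2)) as [d Hh]; [lra|].
  exists d. split; [exact (cond_pos d)|]. intros h Hh0. split.
  - assert (H1 := Hh (- h) ltac:(lra) ltac:(rewrite Rabs_left; lra)).
    replace (q + - h) with (q - h) in H1 by ring.
    set (D := F (q - h) - F q) in *.
    set (X := D / - h) in *.
    assert (HD : X < 0). { apply Rabs_def2 in H1. lra. }
    assert (D = X * (- h)) by (unfold X; field; lra).
    assert (0 < D) by nra. unfold D in *. lra.
  - assert (H1 := Hh h ltac:(lra) ltac:(rewrite Rabs_right; lra)).
    set (D := F (q + h) - F q) in *.
    set (X := D / h) in *.
    assert (HD : X < 0). { apply Rabs_def2 in H1. lra. }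
    assert (D = X * h) by (unfold X; field; lra).
    assert (D < 0) by nra. unfold D in *. lra.
Qed.

Lemma ext_min (f : R -> R) (T : R) : 0 < T -> (forall t, f (t + T) = f t) ->
  (forall t, ex_derive f t) -> (forall t, ex_derive (Derive f) t) ->
  exists q, Derive f q = 0 /\ 0 <= Derive (Derive f) q.
Proof.
  intros HT Hp Hd Hd2.
  assert (Hc : forall c, continuity_pt f c).
  { intro c. apply derivable_continuous_pt. exists (Derive f c). apply dl, Hd. }
  destruct (continuity_ab_min f 0 T ltac:(lra) (fun c _ => Hc c)) as [m [Hm Hmb]].
  assert (Hmin : forall t, 0 <= t <= 2 * T -> f m <= f t).
  { intros t Ht. destruct (Rle_lt_dec t T).
    - apply Hm; lra.
    - replace t with ((t - T) + T) by ring. rewrite Hp. apply Hm; lra. }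
  assert (Hq : exists q, 0 < q < 2 * T /\ forall t, 0 <= t <= 2 * T -> f q <= f t).
  { destruct (Rlt_le_dec m T).
    - exists (m + T). split; [lra|]. rewrite Hp. exact Hmin.
    - exists m. split; [lra|]. exact Hmin. }
  destruct Hq as [q [Hqb Hqm]].
  assert (HD0 : Derive f q = 0).
  { destruct (Rtotal_order (Derive f q) 0) as [Hl|[He|Hg]]; [exfalso| exact He | exfalso].
    + destruct (sign_lemma f q _ (dl f q (Hd q)) Hl) as [d [Hd0 Hs]].
      set (h := Rmin (d/2) ((2*T - q)/2)).
      assert (0 < h < d). { unfold h. split. apply Rmin_pos; lra. 
        apply Rle_lt_trans with (d/2). apply Rmin_l. lra. }
      assert (h <= (2*T-q)/2) by apply Rmin_r.
      destruct (Hs h) as [_ H2]; [lra|].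
      assert (f q <= f (q + h)) by (apply Hqm; lra). lra.
    + assert (Hl : derivable_pt_lim (- f) q (- Derive f q)) by (apply derivable_pt_lim_opp, dl, Hd).
      destruct (sign_lemma (- f)%F q _ Hl ltac:(lra)) as [d [Hd0 Hs]].
      set (h := Rmin (d/2) (q/2)).
      assert (0 < h < d). { unfold h. split. apply Rmin_pos; lra. 
        apply Rle_lt_trans with (d/2). apply Rmin_l. lra. }
      assert (h <= q/2) by apply Rmin_r.
      destruct (Hs h) as [H2 _]; [lra|]. unfold opp_fct in H2.
      assert (f q <= f (q - h)) by (apply Hqm; lra). lra. }
  exists q. split; [exact HD0|].
  { destruct (Rle_lt_dec 0 (Derive (Derive f) q)) as [|Hl]; [assumption|exfalso].
    destruct (sign_lemma (Derive f) q _ (dl _ q (Hd2 q)) Hl) as [d [Hd0 Hs]].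
    set (h := Rmin (d/2) (q/2)).
    assert (0 < h < d). { unfold h. split. apply Rmin_pos; lra. 
      apply Rle_lt_trans with (d/2). apply Rmin_l. lra. }
    assert (h <= q/2) by apply Rmin_r.
    destruct (MVT_cor2 f (Derive f) (q - h) q ltac:(lra) (fun c _ => dl f c (Hd c)))
      as [c [Hmvt Hcb]].
    destruct (Hs (q - c)) as [H2 _]; [lra|].
    replace (q - (q - c)) with c in H2 by ring.
    assert (f q <= f (q - h)) by (apply Hqm; lra).
    rewrite HD0 in H2. nra. }
Qed.

Lemma core (p v a : vec3) (alpha : R) :
  vz v = 0 -> dot p p = 1 -> dot p v = 0 -> dot v v + dot p a = 0 ->
  v <> (0,0,0) -> -1 < vz p < 1 ->
  dot a (vscale (/ vnorm v) (cross v p)) / (vnorm v ^ 2) =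
    alpha * dot (vscale (/ vnorm v) (cross v p)) (xi p) / dN p ->
  vz a * dot v v * dN p = - (dot v v * dot v v) * (vz p * dN p + alpha * sin (dN p)).
Proof.
  destruct p as [[px py] pz]; destruct v as [[vx0 vy0] vz0]; destruct a as [[ax ay] az].
  unfold vnorm, kappa; unfold vz, vx, vy, dot, xi, dN, vscale, cross, vsub, Npole, vx, vy, vz; simpl.
  intros Hvz HP HD1 HD2 Hv Hz H. subst vz0.
  set (V := vx0 * vx0 + vy0 * vy0 + 0 * 0) in *.
  assert (HV : 0 < V).
  { unfold V. destruct (Req_dec vx0 0); destruct (Req_dec vy0 0).
    - subst. exfalso; apply Hv; reflexivity.
    - nra. - nra. - nra. }
  set (r := sqrt V) in *.
  assert (Hr : 0 < r) by (apply sqrt_lt_R0; exact HV).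
  assert (Hrr : r * r = V) by (apply sqrt_sqrt; lra).
  set (u := acos pz) in *. set (s := sin u) in *.
  assert (Hc : cos u = pz) by (apply cos_acos; lra).
  assert (Hu : 0 <= u <= PI) by apply acos_bound.
  assert (Hu0 : u <> 0) by (intro E; rewrite E, cos_0 in Hc; lra).
  assert (HuP : u <> PI) by (intro E; rewrite E, cos_PI in Hc; lra).
  assert (Hs : 0 < s) by (apply sin_gt_0; lra).
  assert (Hss : s * s = 1 - pz * pz).
  { pose proof (sin2_cos2 u) as E. unfold Rsqr in E. rewrite Hc in E. unfold s. lra. }
  set (A := ax * (vy0 * pz) + ay * (- (vx0 * pz)) + az * (vx0 * py - vy0 * px)).
  set (C := vx0 * py - vy0 * px).
  assert (L : (ax * (/ r * (vy0 * pz - 0 * py)) + ay * (/ r * (0 * px - vx0 * pz)) +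
      az * (/ r * (vx0 * py - vy0 * px))) / (r * (r * 1)) = A / (r * r * r)).
  { unfold A. field. lra. }
  assert (Rh : alpha * (/ r * (vy0 * pz - 0 * py) * (/ s * (pz * px - 0)) +
      / r * (0 * px - vx0 * pz) * (/ s * (pz * py - 0)) +
      / r * (vx0 * py - vy0 * px) * (/ s * (pz * pz - 1))) / u
      = alpha * (- C) / (r * s * u)).
  { unfold C. field. split; [|split]; lra. }
  rewrite L, Rh in H.  assert (HP' : px*px+py*py+pz*pz - 1 = 0) by lra.
  assert (H2 : A * (s * u) = - alpha * (r * r) * C).
  { assert (Hu' : 0 < u) by lra.
    apply (Rmult_eq_compat_l (r * r * r * s * u)) in H.
    replace (r * r * r * s * u * (A / (r * r * r))) with (A * (s * u)) in H by (field; lra).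
    replace (r * r * r * s * u * (alpha * - C / (r * s * u)))
      with (- alpha * (r * r) * C) in H by (field; split; [|split]; lra).
    exact H. }
  rewrite Hrr in H2.
  assert (E : az * V + V * V * pz - A * C =
    - az * V * (px*px+py*py+pz*pz - 1) + az * (px*vx0+py*vy0+pz*0)^2
    + pz * V * (V + (px*ax+py*ay+pz*az)) - pz * (ax*vx0+ay*vy0) * (px*vx0+py*vy0+pz*0)).
  { unfold A, C, V. ring. }
  assert (E1 : az * V = - V * V * pz + A * C).
  { rewrite HD1, HP' in E. unfold V in E, HD2 |- *. rewrite HD2 in E. lra. }
  assert (EC : C * C = V * (s * s)).
  { rewrite Hss. unfold C, V.
    assert (Hpp : px*px + py*py = 1 - pz*pz) by lra.
    replace ((vx0 * py - vy0 * px) * (vx0 * py - vy0 * px)) with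
      ((vx0*vx0+vy0*vy0)*(px*px+py*py) - (px*vx0+py*vy0+pz*0)^2) by ring.
    rewrite HD1, Hpp. ring. }
  apply (Rmult_eq_reg_r s); [|lra].
  replace (az * V * u * s) with ((az * V) * u * s) by ring.
  rewrite E1.
  replace ((- V * V * pz + A * C) * u * s) with (- V * V * pz * u * s + (A * (s * u)) * C) by ring.
  rewrite H2.
  replace (- alpha * V * C * C) with (- alpha * V * (C * C)) by ring.
  rewrite EC. ring.
Qed.

Lemma acos_facts z : -1 < z < 1 -> 0 < acos z /\ 0 < sin (acos z).
Proof.
  intro Hz. set (u := acos z).
  assert (Hc : cos u = z) by (apply cos_acos; lra).
  assert (Hu : 0 <= u <= PI) by apply acos_bound.
  assert (Hu0 : u <> 0) by (intro E; rewrite E, cos_0 in Hc; lra).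
  assert (HuP : u <> PI) by (intro E; rewrite E, cos_PI in Hc; lra).
  split; [lra|]. apply sin_gt_0; lra.
Qed.

Lemma vpos (v : vec3) : v <> (0,0,0) -> 0 < dot v v.
Proof.
  destruct v as [[a b] c]. unfold dot, vx, vy, vz; simpl. intro H.
  destruct (Req_dec a 0); destruct (Req_dec b 0); destruct (Req_dec c 0); try nra.
  subst; exfalso; apply H; reflexivity.
Qed.

Theorem theorem3p4 (alpha : R) (g : curve) :
  alpha <> 0 ->
  smooth_curve g -> regular_curve g -> on_sphere g -> closed_curve g ->
  avoids_N g -> alpha_stationary alpha g ->
  ((forall t, 0 < vz (pt g t)) -> alpha < 0) /\
  ((forall t, vz (pt g t) < 0) -> 0 < alpha).
Proof.
  intros Ha Hs Hr Ho [T [HT Hper]] HN Hst.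
  assert (Hpz : forall t, cz g (t + T) = cz g t).
  { intro t. exact (f_equal vz (Hper t)). }
  assert (Dz : forall t, ex_derive (cz g) t) by (intro t; exact (proj2 (proj2 (Hs 1%nat t)))).
  assert (Dz2 : forall t, ex_derive (Derive (cz g)) t) by (intro t; exact (proj2 (proj2 (Hs 2%nat t)))).
  assert (Hlt1 : forall t, vz (pt g t) < 1).
  { intro t. destruct (Rlt_le_dec (vz (pt g t)) 1) as [|Hge]; [assumption|exfalso].
    pose proof (Ho t) as E. apply (HN t). unfold pt, dot, vx, vy, vz in *; simpl in *.
    assert (cx g t = 0) by nra. assert (cy g t = 0) by nra. assert (cz g t = 1) by nra.
    rewrite H, H0, H1. reflexivity. }
  assert (Key : forall q, Derive (cz g) q = 0 -> -1 < vz (pt g q) ->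
     vz (acc g q) * dot (vel g q) (vel g q) * dN (pt g q) =
     - (dot (vel g q) (vel g q) * dot (vel g q) (vel g q)) *
       (vz (pt g q) * dN (pt g q) + alpha * sin (dN (pt g q)))).
  { intros q Hq0 Hq1. destruct (sphere_ids g Hs Ho q) as [I1 I2].
    apply core; [exact Hq0 | apply Ho | exact I1 | exact I2 | apply Hr | split; [assumption| apply Hlt1] |].
    apply Hst. intro E. rewrite E in Hq1. unfold Spole, vz in Hq1; simpl in Hq1. lra. }
  split.
  - intro Hup.
    destruct (ext_min (cz g) T HT Hpz Dz Dz2) as [q [Hq0 Hq2]].
    assert (Hz1 : -1 < vz (pt g q)) by (specialize (Hup q); lra).
    pose proof (Key q Hq0 Hz1) as K.
    pose proof (vpos _ (Hr q)) as HV.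
    destruct (acos_facts (vz (pt g q)) (conj Hz1 (Hlt1 q))) as [Hu Hsn].
    unfold dN in K.
    change (vz (acc g q)) with (Derive (Derive (cz g)) q) in K.
    set (V := dot (vel g q) (vel g q)) in *.
    set (u := acos (vz (pt g q))) in *.
    set (s := sin u) in *. set (z := vz (pt g q)) in *. specialize (Hup q). fold z in Hup.
    set (az := Derive (Derive (cz g)) q) in *.
    assert (0 <= az * V * u) by (apply Rmult_le_pos; [apply Rmult_le_pos|]; lra).
    assert (z * u + alpha * s <= 0).
    { destruct (Rle_lt_dec (z * u + alpha * s) 0); [assumption|]. 
      assert (0 < V * V * (z * u + alpha * s)) by (apply Rmult_lt_0_compat; [nra|lra]). lra. }
    assert (0 < z * u) by nra.
    nra.
  - intro Hdn.
    set (f := fun t => - cz g t).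
    assert (Df : forall t, ex_derive f t) by (intro t; exact (ex_derive_n_opp (cz g) 1 t (proj2 (proj2 (Hs 1%nat t))))).
    assert (DfE : forall t, Derive f t = - Derive (cz g) t) by (intro t; apply Derive_opp).
    assert (Df2 : forall t, ex_derive (Derive f) t).
    { intro t. exact (ex_derive_n_opp (cz g) 2 t (proj2 (proj2 (Hs 2%nat t)))). }
    assert (Hpf : forall t, f (t + T) = f t) by (intro t; unfold f; rewrite Hpz; reflexivity).
    destruct (ext_min f T HT Hpf Df Df2) as [q [Hq0 Hq2]].
    rewrite DfE in Hq0.
    pose proof (Derive_n_opp (cz g) 2 q) as E2. simpl in E2.
    change (Derive (Derive f) q = - Derive (Derive (cz g)) q) in E2.
    rewrite E2 in Hq2.
    assert (Hq0' : Derive (cz g) q = 0) by lra.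
    pose proof (vpos _ (Hr q)) as HV.
    destruct (sphere_ids g Hs Ho q) as [I1 I2].
    assert (Hz1 : -1 < vz (pt g q)).
    { destruct (Rlt_le_dec (-1) (vz (pt g q))) as [|Hle]; [assumption|exfalso].
      pose proof (Ho q) as E.
      unfold pt, dot, vel, acc, vx, vy, vz in *; simpl in *.
      assert (cx g q = 0) by nra. assert (cy g q = 0) by nra. assert (cz g q = -1) by nra.
      rewrite H, H0, H1 in I2.
      change (fun x0 : R => cz g x0) with (cz g) in I2;
      change (fun x => Derive (cz g) x) with (Derive (cz g)) in I2.
      nra. }
    pose proof (Key q Hq0' Hz1) as K.
    destruct (acos_facts (vz (pt g q)) (conj Hz1 (Hlt1 q))) as [Hu Hsn].
    unfold dN in K.
    change (vz (acc g q)) with (Derive (Derive (cz g)) q) in K.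
    set (V := dot (vel g q) (vel g q)) in *.
    set (u := acos (vz (pt g q))) in *.
    set (s := sin u) in *. set (z := vz (pt g q)) in *. specialize (Hdn q). fold z in Hdn.
    set (az := Derive (Derive (cz g)) q) in *.
    assert (az * V * u <= 0).
    { assert (0 <= (- az) * V * u) by (apply Rmult_le_pos; [apply Rmult_le_pos|]; lra). lra. }
    assert (0 <= z * u + alpha * s).
    { destruct (Rle_lt_dec 0 (z * u + alpha * s)); [assumption|]. 
      assert (0 < V * V * (- (z * u + alpha * s))) by (apply Rmult_lt_0_compat; [nra|lra]). lra. }
    assert (z * u < 0) by nra.
    nra.
Qed.
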